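(* Let $\Lambda$ be a row-finite $k$-graph with no sources and $R$ a commutative ring with $1$. For $(\alpha,\beta)\in\Lambda\times\Lambda$ with $s(\alpha)=s(\beta)$, the following are equivalent: (1) $s_{\alpha\gamma}s_{(\alpha\gamma)^*}=s_{\beta\gamma}s_{(\beta\gamma)^*}$ for all $\gamma\in s(\alpha)\Lambda$; (2) $s_\alpha s_{\beta^*}$ is normal (i.e. $aa^*=a^*a$ for $a=s_\alpha s_{\beta^*}$) and commutes with every element of $\mathcal{D}$; (3) $\alpha\gamma=\beta\gamma$ for all $\gamma\in s(\alpha)\Lambda^\infty$.
   Context: A $k$-graph is a countable category $\Lambda$ (objects $\Lambda^0$, vertices; morphisms, paths; range/source maps $r,s$) with a degree functor $d:\Lambda\to\mathbb{N}^k$ satisfying unique factorization: if $d(\lambda)=m+n$ there are unique $\mu,\nu$ with $s(\mu)=r(\nu)$, $d(\mu)=m$, $d(\nu)=n$, $\lambda=\mu\nu$. $\Lambda^n=d^{-1}(n)$, $v\Lambda=\{\lambda:r(\lambda)=v\}$, $v\Lambda^n=v\Lambda\cap\Lambda^n$. Row-finite with no sources: each $v\Lambda^n$ is finite and nonempty. ${\rm KP}_R(\Lambda)$ is the universal $R$-algebra generated by $p_v$ ($v\in\Lambda^0$) and $s_\lambda,s_{\lambda^*}$ ($d(\lambda)\neq0$) with relations (KP1) $p_v$ mutually orthogonal idempotents; (KP2) $s_\lambda s_\mu=s_{\lambda\mu}$, $s_{\mu^*}s_{\lambda^*}=s_{(\lambda\mu)^*}$, $p_{r(\lambda)}s_\lambda=s_\lambda=s_\lambda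 p_{s(\lambda)}$, $p_{s(\lambda)}s_{\lambda^*}=s_{\lambda^*}=s_{\lambda^*}p_{r(\lambda)}$ when $r(\mu)=s(\lambda)$; (KP3) $s_{\lambda^*}s_\mu=\delta_{\lambda,\mu}p_{s(\lambda)}$ when $d(\lambda)=d(\mu)$; (KP4) $p_v=\sum_{\lambda\in v\Lambda^n}s_\lambda s_{\lambda^*}$ for $n\neq0$. Convention $s_v=s_{v^*}=p_v$. ${\rm KP}_R(\Lambda)$ is spanned by $\{s_\mu s_{\nu^*}: s(\mu)=s(\nu)\}$ and carries the $R$-linear involution $a\mapsto a^*$ with $(s_\alpha s_{\beta^*})^*=s_\beta s_{\alpha^*}$. $\mathcal{D}$ is the $R$-subalgebra generated by $\{s_\mu s_{\mu^*}:\mu\in\Lambda\}$. Let $\Omega_k$ be the $k$-graph with objects $\mathbb{N}^k$, morphisms $\{(p,q): p\le q\}$, $r(p,q)=p$, $s(p,q)=q$, $(p,q)(q,t)=(p,t)$, $d(p,q)=q-p$. An infinite path is a degree-preserving functor $x:\Omega_k\to\Lambda$; $\Lambda^\infty$ is the set of infinite paths, $r(x)=x(0,0)$, and $v\Lambda^\infty=\{x: r(x)=v\}$. For $\alpha\in\Lambda$ and $x\in s(\alpha)\Lambda^\infty$, $\alpha x$ is the unique infinite path with $(\alpha x)(0,n)=\alpha\,x(0,n-d(\alpha))$ for all $n\ge d(\alpha)$. *)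

(* Defs.v *)
From HB Require Import structures.
From mathcomp Require Import all_boot all_order all_algebra.
Set Implicit Arguments. Unset Strict Implicit. Unset Printing Implicit Defensive.
Import GRing.Theory.
Local Open Scope ring_scope.

Definition degT (k : nat) := {ffun 'I_k -> nat}.
Definition dzero (k : nat) : degT k := [ffun _ => 0%N].
Definition dadd (k : nat) (m n : degT k) : degT k := [ffun i => (m i + n i)%N].
Definition dsub (k : nat) (m n : degT k) : degT k := [ffun i => (m i - n i)%N].
Definition dle (k : nat) (m n : degT k) : bool := [forall i, (m i <= n i)%N].

(* A countable category (objects Obj, morphisms Mor, both countable types)
   with range rg, source sr, identities idm, composition kcomp (only meaningful
   when sr l = rg m; kcomp l m is "l m") and a degree functor deg into N^k
   satisfying the unique factorisation property. *)
Record kgraph (k : nat) := KGraph {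
  Obj : countType;
  Mor : countType;
  rg : Mor -> Obj;
  sr : Mor -> Obj;
  idm : Obj -> Mor;
  kcomp : Mor -> Mor -> Mor;
  deg : Mor -> degT k;
  rg_idm : forall v, rg (idm v) = v;
  sr_idm : forall v, sr (idm v) = v;
  rg_comp : forall l m, sr l = rg m -> rg (kcomp l m) = rg l;
  sr_comp : forall l m, sr l = rg m -> sr (kcomp l m) = sr m;
  comp_assoc : forall l m n, sr l = rg m -> sr m = rg n ->
      kcomp l (kcomp m n) = kcomp (kcomp l m) n;
  comp_idl : forall l, kcomp (idm (rg l)) l = l;
  comp_idr : forall l, kcomp l (idm (sr l)) = l;
  deg_idm : forall v, deg (idm v) = dzero k;
  deg_comp : forall l m, sr l = rg m -> deg (kcomp l m) = dadd (deg l) (deg m);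
  unique_factorisation : forall l (m n : degT k), deg l = dadd m n ->
      exists! mn : Mor * Mor,
        [/\ sr mn.1 = rg mn.2, deg mn.1 = m, deg mn.2 = n & l = kcomp mn.1 mn.2]
}.

Arguments rg {k L} _ : rename.
Arguments sr {k L} _ : rename.
Arguments idm {k L} _ : rename.
Arguments kcomp {k L} _ _ : rename.
Arguments deg {k L} _ : rename.

Definition row_finite_no_sources (k : nat) (L : kgraph k) : Prop :=
  forall (v : Obj L) (n : degT k),
    exists l : seq (Mor L),
      [/\ uniq l, l != [::] &
          forall lam, (lam \in l) = (rg lam == v) && (deg lam == n)].

(* A degree-preserving functor x : Ω_k -> Λ, given by its values on the
   morphisms (p,q), p <= q, of Ω_k; the object p is sent to rg (x p p). *)
Definition is_infpath (k : nat) (L : kgraph k) (x : degT k -> degT k -> Mor L) : Prop :=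
  [/\ forall p q, dle p q -> rg (x p q) = rg (x p p) /\ sr (x p q) = rg (x q q),
      forall p, x p p = idm (rg (x p p)),
      forall p q t, dle p q -> dle q t -> kcomp (x p q) (x q t) = x p t &
      forall p q, dle p q -> deg (x p q) = dsub q p].

Definition infpath_range (k : nat) (L : kgraph k) (x : degT k -> degT k -> Mor L) : Obj L :=
  rg (x (dzero k) (dzero k)).

Definition infpath_eq (k : nat) (L : kgraph k) (x y : degT k -> degT k -> Mor L) : Prop :=
  forall p q, dle p q -> x p q = y p q.

Definition is_concat (k : nat) (L : kgraph k) (a : Mor L)
    (x y : degT k -> degT k -> Mor L) : Prop :=
  is_infpath y /\
  forall n, dle (deg a) n -> y (dzero k) n = kcomp a (x (dzero k) (dsub n (deg a))).

Record nualg (R : comNzRingType) := NUAlg {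
  nua_car :> lmodType R;
  nua_mul : nua_car -> nua_car -> nua_car;
  nua_mulA : associative nua_mul;
  nua_mulDl : left_distributive nua_mul +%R;
  nua_mulDr : right_distributive nua_mul +%R;
  nua_mulZl : forall (c : R) x y, nua_mul (c *: x) y = c *: nua_mul x y;
  nua_mulZr : forall (c : R) x y, nua_mul x (c *: y) = c *: nua_mul x y
}.
Arguments nua_mul {R A} _ _ : rename.

Definition nua_hom (R : comNzRingType) (A B : nualg R) (f : A -> B) : Prop :=
  [/\ forall x y, f (x + y) = f x + f y,
      forall (c : R) x, f (c *: x) = c *: f x &
      forall x y, f (nua_mul x y) = nua_mul (f x) (f y)].

(* p v = p_v ; s l = s_l ; ss l = s_{l^*}.  Generators are s_l, s_{l^*} for
   d(l) <> 0, with the convention s_v = s_{v^*} = p_v (v identified with idm v,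
   the unique path of degree 0 at v). *)
Definition is_KP_family (k : nat) (L : kgraph k) (R : comNzRingType) (A : nualg R)
    (p : Obj L -> A) (s ss : Mor L -> A) : Prop :=
  [/\
      (forall v, s (idm v) = p v /\ ss (idm v) = p v),
      (forall v w, nua_mul (p v) (p w) = if v == w then p v else 0),
      (forall l m, deg l != dzero k -> deg m != dzero k -> rg m = sr l ->
         nua_mul (s l) (s m) = s (kcomp l m) /\
         nua_mul (ss m) (ss l) = ss (kcomp l m)) /\
      (forall l, deg l != dzero k ->
         [/\ nua_mul (p (rg l)) (s l) = s l, nua_mul (s l) (p (sr l)) = s l,
             nua_mul (p (sr l)) (ss l) = ss l & nua_mul (ss l) (p (rg l)) = ss l]),
      (forall l m, deg l != dzero k -> deg l = deg m ->
         nua_mul (ss l) (s m) = if l == m then p (sr l) else 0) &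
      (forall v (n : degT k), n != dzero k -> forall e : seq (Mor L), uniq e ->
         (forall lam, (lam \in e) = (rg lam == v) && (deg lam == n)) ->
         p v = \sum_(lam <- e) nua_mul (s lam) (ss lam))].

Definition is_KP_algebra (k : nat) (L : kgraph k) (R : comNzRingType) (A : nualg R)
    (p : Obj L -> A) (s ss : Mor L -> A) : Prop :=
  is_KP_family p s ss /\
  forall (B : nualg R) (q : Obj L -> B) (t tt : Mor L -> B), is_KP_family q t tt ->
    (exists f : A -> B, nua_hom f /\
        [/\ forall v, f (p v) = q v, forall l, f (s l) = t l & forall l, f (ss l) = tt l])
    /\
    (forall f g : A -> B, nua_hom f -> nua_hom g ->
        (forall v, f (p v) = q v) -> (forall l, f (s l) = t l) -> (forall l, f (ss l) = tt l) ->
        (forall v, g (p v) = q v) -> (forall l, g (s l) = t l) -> (forall l, g (ss l) = tt l) ->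
        forall x, f x = g x).

Inductive in_diag (k : nat) (L : kgraph k) (R : comNzRingType) (A : nualg R)
    (s ss : Mor L -> A) : A -> Prop :=
  | diag_gen : forall mu, in_diag s ss (nua_mul (s mu) (ss mu))
  | diag_zero : in_diag s ss 0
  | diag_add : forall x y, in_diag s ss x -> in_diag s ss y -> in_diag s ss (x + y)
  | diag_scale : forall (c : R) x, in_diag s ss x -> in_diag s ss (c *: x)
  | diag_mul : forall x y, in_diag s ss x -> in_diag s ss y -> in_diag s ss (nua_mul x y).

(* Main.v *)
Require Import Defs.
From HB Require Import structures.
From mathcomp Require Import all_boot all_order all_algebra.
From mathcomp Require Import zify.
From mathcomp Require Import boolp.
From Stdlib Require Import Classical ClassicalEpsilon FunctionalExtensionality ProofIrrelevance.
Import GRing.Theory.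
Set Implicit Arguments. Unset Strict Implicit. Unset Printing Implicit Defensive.

Lemma dE {k} (m n : degT k) : (forall i, m i = n i) -> m = n.
Proof. by move=> h; apply/ffunP. Qed.

Lemma daddC {k} (m n : degT k) : dadd m n = dadd n m.
Proof. by apply: dE=> i; rewrite !ffunE addnC. Qed.
Lemma daddA {k} (m n q : degT k) : dadd m (dadd n q) = dadd (dadd m n) q.
Proof. by apply: dE=> i; rewrite !ffunE addnA. Qed.
Lemma dadd0 {k} (m : degT k) : dadd (dzero k) m = m.
Proof. by apply: dE=> i; rewrite !ffunE. Qed.
Lemma daddd0 {k} (m : degT k) : dadd m (dzero k) = m.
Proof. by apply: dE=> i; rewrite !ffunE addn0. Qed.
Lemma dadd_cancel {k} (m n q : degT k) : dadd m n = dadd m q -> n = q.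
Proof. move=> h; apply: dE=> i; have := congr1 (fun f : degT k => f i) h; rewrite !ffunE; lia. Qed.
Lemma dleP {k} (m n : degT k) : reflect (forall i, m i <= n i) (dle m n).
Proof. exact: forallP. Qed.
Lemma dle_refl {k} (m : degT k) : dle m m.
Proof. by apply/dleP. Qed.
Lemma dle_trans {k} (m n q : degT k) : dle m n -> dle n q -> dle m q.
Proof. move=> /dleP h1 /dleP h2; apply/dleP=> i; exact: leq_trans (h1 i) (h2 i). Qed.
Lemma dle0 {k} (m : degT k) : dle (dzero k) m.
Proof. by apply/dleP=> i; rewrite ffunE. Qed.
Lemma dle_addr {k} (m n : degT k) : dle m (dadd m n).
Proof. by apply/dleP=> i; rewrite ffunE leq_addr. Qed.
Lemma dle_addl {k} (m n : degT k) : dle n (dadd m n).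
Proof. by apply/dleP=> i; rewrite ffunE leq_addl. Qed.
Lemma dle_add2l {k} (m n q : degT k) : dle n q -> dle (dadd m n) (dadd m q).
Proof. move=> /dleP h; apply/dleP=> i; rewrite !ffunE leq_add2l; exact: h. Qed.
Lemma dsubK {k} (m n : degT k) : dle m n -> dadd m (dsub n m) = n.
Proof. move=> /dleP h; apply: dE=> i; rewrite !ffunE; have := h i; lia. Qed.
Lemma daddKsub {k} (m n : degT k) : dsub (dadd m n) m = n.
Proof. apply: dE=> i; rewrite !ffunE; lia. Qed.
Lemma dsub0 {k} (m : degT k) : dsub m (dzero k) = m.
Proof. apply: dE=> i; rewrite !ffunE; lia. Qed.
Lemma dsubnn {k} (m : degT k) : dsub m m = dzero k.
Proof. apply: dE=> i; rewrite !ffunE; lia. Qed.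
Lemma dle_sub {k} (m n : degT k) : dle (dsub n m) n.
Proof. apply/dleP=> i; rewrite !ffunE; lia. Qed.
Lemma dle_add_sub {k} (m n q : degT k) : dle m n -> dle (dadd q (dsub n m)) (dadd q n).
Proof. move=> /dleP h; apply/dleP=> i; rewrite !ffunE; have := h i; lia. Qed.
Lemma dk0 (m : degT 0) : m = dzero 0.
Proof. by apply: dE=> -[]. Qed.

Lemma fact_uniq {k} {L : kgraph k} (a b a' b' : Mor L) :
  sr a = rg b -> sr a' = rg b' -> deg a = deg a' -> kcomp a b = kcomp a' b' ->
  a = a' /\ b = b'.
Proof.
move=> h1 h2 hd he.
have hdb : deg b = deg b'.
  have := deg_comp h1; rewrite he deg_comp // hd => /esym; exact: dadd_cancel.
have [[x y] [[/= _ _ _ _] hu]] := unique_factorisation (deg_comp h1).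
have e1 := hu (a, b) (And4 h1 erefl erefl erefl).
have e2 := hu (a', b') (And4 h2 (esym hd) (esym hdb) he).
by case: e1 e2 => -> -> [-> ->].
Qed.

Lemma fact_ex {k} {L : kgraph k} (l : Mor L) (m : degT k) : dle m (deg l) ->
  exists ab : Mor L * Mor L,
    [/\ sr ab.1 = rg ab.2, deg ab.1 = m, deg ab.2 = dsub (deg l) m & l = kcomp ab.1 ab.2].
Proof.
move=> h; have [ab [hab _]] := unique_factorisation (esym (dsubK h)).
by exists ab.
Qed.

Definition fpair {k} {L : kgraph k} (l : Mor L) (m : degT k) : Mor L * Mor L :=
  epsilon (inhabits (l, l)) (fun ab => dle m (deg l) ->
    [/\ sr ab.1 = rg ab.2, deg ab.1 = m, deg ab.2 = dsub (deg l) m & l = kcomp ab.1 ab.2]).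
Definition pre {k} {L : kgraph k} (l : Mor L) m := (fpair l m).1.
Definition suf {k} {L : kgraph k} (l : Mor L) m := (fpair l m).2.

Lemma fpairP {k} {L : kgraph k} (l : Mor L) m : dle m (deg l) ->
  [/\ sr (pre l m) = rg (suf l m), deg (pre l m) = m, deg (suf l m) = dsub (deg l) m
    & l = kcomp (pre l m) (suf l m)].
Proof.
move=> h; rewrite /pre /suf /fpair.
have [ab hab] := fact_ex h.
set P := (fun ab : Mor L * Mor L => dle m (deg l) -> _).
have ex : exists ab, P ab by exists ab.
exact: (epsilon_spec (inhabits (l, l)) P ex h).
Qed.

Lemma preE {k} {L : kgraph k} (a b : Mor L) : sr a = rg b ->
  pre (kcomp a b) (deg a) = a /\ suf (kcomp a b) (deg a) = b.
Proof.
move=> h; have hle : dle (deg a) (deg (kcomp a b)) by rewrite deg_comp //; exact: dle_addr.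
have [h1 h2 _ h4] := fpairP hle.
have [] := fact_uniq h1 h h2 (esym h4); by move=> -> ->.
Qed.

Lemma rg_pre {k} {L : kgraph k} (l : Mor L) m : dle m (deg l) -> rg (pre l m) = rg l.
Proof. move=> h; have [h1 _ _ h4] := fpairP h; by rewrite {2}h4 rg_comp. Qed.
Lemma sr_suf {k} {L : kgraph k} (l : Mor L) m : dle m (deg l) -> sr (suf l m) = sr l.
Proof. move=> h; have [h1 _ _ h4] := fpairP h; by rewrite {2}h4 sr_comp. Qed.
Lemma rg_suf {k} {L : kgraph k} (l : Mor L) m : dle m (deg l) -> rg (suf l m) = sr (pre l m).
Proof. move=> h; have [h1 _ _ h4] := fpairP h; by rewrite h1. Qed.
Lemma deg_pre {k} {L : kgraph k} (l : Mor L) m : dle m (deg l) -> deg (pre l m) = m.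
Proof. by move=> h; have [] := fpairP h. Qed.
Lemma deg_suf {k} {L : kgraph k} (l : Mor L) m : dle m (deg l) -> deg (suf l m) = dsub (deg l) m.
Proof. by move=> h; have [] := fpairP h. Qed.
Lemma pre_suf {k} {L : kgraph k} (l : Mor L) m : dle m (deg l) -> kcomp (pre l m) (suf l m) = l.
Proof. by move=> h; have [] := fpairP h. Qed.

Lemma deg0_idm {k} {L : kgraph k} (l : Mor L) : deg l = dzero k -> l = idm (rg l).
Proof.
move=> h.
have e : kcomp l (idm (sr l)) = kcomp (idm (rg l)) l by rewrite comp_idr comp_idl.
have [] := fact_uniq _ _ _ e => //; by rewrite ?rg_idm ?sr_idm ?deg_idm.
Qed.

Lemma pre_full {k} {L : kgraph k} (l : Mor L) : pre l (deg l) = l.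
Proof. have := @preE _ _ l (idm (sr l)) (esym (rg_idm _)) => -[]; by rewrite comp_idr. Qed.
Lemma suf0 {k} {L : kgraph k} (l : Mor L) : suf l (dzero k) = l.
Proof.
have := @preE _ _ (idm (rg l)) l; rewrite sr_idm comp_idl deg_idm => -[] //.
Qed.

Lemma pre_ext {k} {L : kgraph k} (a b : Mor L) m : sr a = rg b -> dle m (deg a) ->
  pre (kcomp a b) m = pre a m.
Proof.
move=> h hm; have [h1 h2 h3 h4] := fpairP hm.
have hs : sr (suf a m) = rg b by rewrite sr_suf.
rewrite {1}h4 -comp_assoc //.
have [e _] := @preE _ _ (pre a m) (kcomp (suf a m) b) (ltac:(by rewrite rg_comp)).
by rewrite h2 in e.
Qed.

Lemma pre_pre {k} {L : kgraph k} (l : Mor L) n m : dle n m -> dle m (deg l) ->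
  pre (pre l m) n = pre l n.
Proof.
move=> h1 h2; have [e1 e2 _ e4] := fpairP h2.
by rewrite {2}e4 pre_ext // e2.
Qed.

Lemma suf_suf {k} {L : kgraph k} (l : Mor L) m n : dle (dadd m n) (deg l) ->
  suf (suf l m) n = suf l (dadd m n).
Proof.
move=> h; have hm : dle m (deg l) := dle_trans (dle_addr m n) h.
have [e1 e2 e3 e4] := fpairP hm.
have hn : dle n (deg (suf l m)).
  rewrite e3; apply/dleP=> i; move/dleP: h => /(_ i); rewrite !ffunE; lia.
have [f1 f2 f3 f4] := fpairP hn.
have hc : sr (kcomp (pre l m) (pre (suf l m) n)) = rg (suf (suf l m) n)
  by rewrite sr_comp ?f1 // rg_pre // -e1.
have el : l = kcomp (kcomp (pre l m) (pre (suf l m) n)) (suf (suf l m) n).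
  rewrite -comp_assoc; [by rewrite -f4 | by rewrite rg_pre // | by []].
have [_ ] := preE hc; rewrite -el deg_comp ?rg_pre // e2 f2 => ->; done.
Qed.

Lemma pre_comp_left {k} {L : kgraph k} (a b : Mor L) n : sr a = rg b -> dle n (deg b) ->
  pre (kcomp a b) (dadd (deg a) n) = kcomp a (pre b n).
Proof.
move=> h hn; have [e1 e2 e3 e4] := fpairP hn.
have hc : sr (kcomp a (pre b n)) = rg (suf b n) by rewrite sr_comp ?e1 // rg_pre.
have [e _] := preE hc.
by rewrite -comp_assoc ?rg_pre // -e4 deg_comp ?rg_pre // e2 in e.
Qed.

Lemma suf_comp_left {k} {L : kgraph k} (a b : Mor L) : sr a = rg b ->
  suf (kcomp a b) (deg a) = b.
Proof. by move=> h; have [] := preE h. Qed.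

Lemma pre0 {k} {L : kgraph k} (l : Mor L) : pre l (dzero k) = idm (rg l).
Proof.
have h := dle0 (deg l); rewrite (deg0_idm (deg_pre h)) rg_pre //.
Qed.

(* prefix systems: models of infinite paths *)
Definition isPS {k} {L : kgraph k} (c : degT k -> Mor L) : Prop :=
  (forall n, deg (c n) = n) /\ (forall n m, dle n m -> pre (c m) n = c n).
Definition psr {k} {L : kgraph k} (c : degT k -> Mor L) : Obj L := rg (c (dzero k)).

Lemma ps_rg {k} {L : kgraph k} (c : degT k -> Mor L) n : isPS c -> rg (c n) = psr c.
Proof.
move=> [h1 h2]; rewrite /psr -(h2 _ _ (dle0 n)) rg_pre // h1; exact: dle0.
Qed.
Lemma ps_0 {k} {L : kgraph k} (c : degT k -> Mor L) : isPS c -> c (dzero k) = idm (psr c).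
Proof. move=> [h1 h2]; exact: deg0_idm. Qed.
Lemma ps_split {k} {L : kgraph k} (c : degT k -> Mor L) n m : isPS c -> dle n m ->
  sr (c n) = rg (suf (c m) n) /\ c m = kcomp (c n) (suf (c m) n).
Proof.
move=> [h1 h2] hnm; have hle : dle n (deg (c m)) by rewrite h1.
have [e1 _ _ e4] := fpairP hle; by rewrite -(h2 _ _ hnm) e1.
Qed.

Definition pshift {k} {L : kgraph k} (m : degT k) (c : degT k -> Mor L) :=
  fun n => suf (c (dadd m n)) m.
Definition pconc {k} {L : kgraph k} (l : Mor L) (c : degT k -> Mor L) :=
  fun n => pre (kcomp l (c n)) n.

Lemma pshift_PS {k} {L : kgraph k} m (c : degT k -> Mor L) : isPS c -> isPS (pshift m c).
Proof.
move=> hc; have [h1 h2] := hc; split=> [n|n q hnq]; rewrite /pshift.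
  by rewrite deg_suf h1 ?daddKsub // dle_addr.
have hq : dle (dadd m n) (dadd m q) by apply: dle_add2l.
have [s1 s2] := ps_split hc (dle_addr m q).
have e : c (dadd m n) = kcomp (c m) (pre (suf (c (dadd m q)) m) n).
  have hn' : dle n (deg (suf (c (dadd m q)) m)).
    by rewrite deg_suf h1 ?daddKsub // dle_addr.
  have := pre_comp_left s1 hn'; rewrite h1 => <-.
  by rewrite -s2 h2.
have := @suf_comp_left _ _ (c m) (pre (suf (c (dadd m q)) m) n).
rewrite h1 -e => -> //; rewrite rg_pre // deg_suf h1 ?daddKsub //; exact: dle_addr.
Qed.

Lemma psr_shift {k} {L : kgraph k} m (c : degT k -> Mor L) : isPS c -> psr (pshift m c) = sr (c m).
Proof.
move=> [h1 h2]; rewrite /psr /pshift daddd0 rg_suf ?h1 ?dle_refl //.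
by have := pre_full (c m); rewrite h1 => ->.
Qed.

Lemma pconc_PS {k} {L : kgraph k} (l : Mor L) (c : degT k -> Mor L) :
  isPS c -> sr l = psr c -> isPS (pconc l c).
Proof.
move=> hc hl; have [h1 h2] := hc; have hr n : sr l = rg (c n) by rewrite ps_rg.
split=> [n|n q hnq]; rewrite /pconc.
  by rewrite deg_pre // deg_comp // h1 dle_addl.
rewrite pre_pre //; last by rewrite deg_comp // h1 dle_addl.
have [s1 s2] := ps_split hc hnq.
rewrite s2 comp_assoc // pre_ext //; last by rewrite deg_comp // h1 dle_addl.
by rewrite sr_comp.
Qed.

Lemma psr_conc {k} {L : kgraph k} (l : Mor L) (c : degT k -> Mor L) :
  isPS c -> sr l = psr c -> psr (pconc l c) = rg l.
Proof.
move=> hc hl; rewrite {1}/psr /pconc pre0 rg_idm rg_comp //.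
Qed.

Lemma pconc_at {k} {L : kgraph k} (l : Mor L) (c : degT k -> Mor L) n :
  isPS c -> sr l = psr c -> pconc l c (dadd (deg l) n) = kcomp l (c n).
Proof.
move=> hc hl; have [h1 h2] := hc; rewrite /pconc pre_comp_left ?ps_rg //.
  by rewrite h2 // dle_addl.
by rewrite h1 dle_addl.
Qed.

Lemma pconc_deg {k} {L : kgraph k} (l : Mor L) (c : degT k -> Mor L) :
  isPS c -> sr l = psr c -> pconc l c (deg l) = l.
Proof.
move=> hc hl; have := pconc_at (dzero k) hc hl; rewrite daddd0 => ->.
by rewrite ps_0 // -hl comp_idr.
Qed.

Lemma shift_conc {k} {L : kgraph k} (l : Mor L) (c : degT k -> Mor L) :
  isPS c -> sr l = psr c -> pshift (deg l) (pconc l c) = c.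
Proof.
move=> hc hl; apply: functional_extensionality => n.
by rewrite /pshift pconc_at // suf_comp_left // ps_rg.
Qed.

Lemma conc_shift {k} {L : kgraph k} m (c : degT k -> Mor L) :
  isPS c -> pconc (c m) (pshift m c) = c.
Proof.
move=> hc; have [h1 h2] := hc; apply: functional_extensionality => n.
have [s1 s2] := ps_split hc (dle_addr m n).
by rewrite /pconc /pshift -s2 h2 // dle_addl.
Qed.

Lemma shift_shift {k} {L : kgraph k} m n (c : degT k -> Mor L) :
  isPS c -> pshift n (pshift m c) = pshift (dadd m n) c.
Proof.
move=> hc; have [h1 h2] := hc; apply: functional_extensionality => q.
rewrite /pshift suf_suf ?daddA // h1 ?daddA; exact: dle_addr.
Qed.

Lemma conc_conc {k} {L : kgraph k} (l m : Mor L) (c : degT k -> Mor L) :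
  isPS c -> sr m = psr c -> sr l = rg m ->
  pconc l (pconc m c) = pconc (kcomp l m) c.
Proof.
move=> hc hm hl; have [h1 h2] := hc; apply: functional_extensionality => n.
have hr : sr m = rg (c n) by rewrite ps_rg.
have hdn : dle n (deg (kcomp m (c n))) by rewrite deg_comp // h1 dle_addl.
rewrite /pconc -comp_assoc //.
have [e1 _ _ e4] := fpairP hdn.
set X := kcomp m (c n); set P := pre X n; set S := suf X n.
have e5 : pre (kcomp l X) n = pre (kcomp l (kcomp P S)) n by rewrite -e4.
have hrP : rg P = rg m by rewrite /P rg_pre // /X rg_comp.
rewrite e5 comp_assoc ?hrP // (@pre_ext _ _ (kcomp l P) S) //.
- by rewrite sr_comp ?hrP // /S sr_suf // /P -e1.
- rewrite deg_comp ?hrP // deg_pre //; exact: dle_addl.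
Qed.

Definition psfun {k} {L : kgraph k} (c : degT k -> Mor L) : degT k -> degT k -> Mor L :=
  fun p q => suf (c q) p.

Lemma psfun_inf {k} {L : kgraph k} (c : degT k -> Mor L) : isPS c -> is_infpath (psfun c).
Proof.
move=> hc; have [h1 h2] := hc; rewrite /psfun; split.
- move=> p q hpq; split.
    rewrite !rg_suf ?h1 ?dle_refl // h2 //.
    by have := pre_full (c p); rewrite h1 => ->.
  rewrite rg_suf ?h1 ?dle_refl // sr_suf ?h1 //.
  by have := pre_full (c q); rewrite h1 => ->.
- move=> p; apply: deg0_idm; rewrite deg_suf h1 ?dle_refl //; exact: dsubnn.
- move=> p q t hpq hqt.
  have [s1 s2] := ps_split hc hqt.
  have hpt := dle_trans hpq hqt.
  have [u1 u2] := ps_split hc hpq.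
  have e : c t = kcomp (c p) (kcomp (suf (c q) p) (suf (c t) q)).
    by rewrite comp_assoc ?sr_suf ?h1 // -u2.
  have hs : sr (suf (c q) p) = rg (suf (c t) q) by rewrite sr_suf ?h1.
  have := @suf_comp_left _ _ (c p) (kcomp (suf (c q) p) (suf (c t) q)).
  by rewrite h1 -e rg_comp // => ->.
- move=> p q hpq; by rewrite deg_suf h1.
Qed.

Lemma psfun_0 {k} {L : kgraph k} (c : degT k -> Mor L) n : psfun c (dzero k) n = c n.
Proof. exact: suf0. Qed.

Lemma fun_PS {k} {L : kgraph k} (x : degT k -> degT k -> Mor L) : is_infpath x ->
  isPS (fun n => x (dzero k) n).
Proof.
move=> [h1 h2 h3 h4]; split=> [n|n m hnm].
  by rewrite h4 ?dsub0 // dle0.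
rewrite -(h3 _ _ _ (dle0 n) hnm).
have [_ e] := h1 _ _ (dle0 n); have [e' _] := h1 _ _ hnm.
have := @preE _ _ (x (dzero k) n) (x n m); rewrite h4 ?dle0 // dsub0 => -[] //.
by rewrite e e' h2 rg_idm.
Qed.

Definition dscale (k j : nat) : degT k := [ffun _ => j].

Lemma path_ex {k} {L : kgraph k} (HL : row_finite_no_sources L) (w : Obj L) n :
  exists l : Mor L, rg l = w /\ deg l = n.
Proof.
have [[|x s] [_ hne hm]] := HL w n => //.
exists x; have := hm x; rewrite mem_head => /esym/andP[/eqP -> /eqP ->]; done.
Qed.

Definition pext {k} {L : kgraph k} (w : Obj L) : Mor L :=
  epsilon (inhabits (idm w)) (fun l => rg l = w /\ deg l = dscale k 1).

Lemma pextP {k} {L : kgraph k} (HL : row_finite_no_sources L) (w : Obj L) :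
  rg (pext w) = w /\ deg (pext w) = dscale k 1.
Proof.
rewrite /pext; apply: (epsilon_spec (inhabits (idm w)) (fun l => rg l = w /\ deg l = dscale k 1)).
exact: path_ex.
Qed.

Fixpoint chain {k} {L : kgraph k} (mu : Mor L) (j : nat) : Mor L :=
  if j is j'.+1 then kcomp (chain mu j') (pext (sr (chain mu j'))) else mu.

Lemma chain_deg {k} {L : kgraph k} (HL : row_finite_no_sources L) (mu : Mor L) j :
  deg (chain mu j) = dadd (deg mu) (dscale k j).
Proof.
elim: j => [|j IH] /=.
  by apply: dE => i; rewrite !ffunE addn0.
have [h1 h2] := pextP HL (sr (chain mu j)).
rewrite deg_comp // IH h2; apply: dE => i; rewrite !ffunE; lia.
Qed.

Lemma chain_pre {k} {L : kgraph k} (HL : row_finite_no_sources L) (mu : Mor L) J j n :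
  (J <= j)%N -> dle n (deg (chain mu J)) -> pre (chain mu j) n = pre (chain mu J) n.
Proof.
move=> hJ hn; elim: j hJ => [|j IH] hJ.
  by move: hJ; rewrite leqn0 => /eqP ->.
case: (ltngtP J j.+1) hJ => // [hlt|->] _; last by [].
have [h1 h2] := pextP HL (sr (chain mu j)).
rewrite /= pre_ext // ?IH //.
apply: dle_trans hn _; rewrite !chain_deg //; apply/dleP=> i; rewrite !ffunE; lia.
Qed.

Definition bnd {k} (n : degT k) : nat := (\sum_(i < k) n i)%N.

Lemma bnd_le {k} (n : degT k) : dle n (dscale k (bnd n)).
Proof.
apply/dleP=> i; rewrite ffunE /bnd (bigD1 i) //=; exact: leq_addr.
Qed.
Lemma bnd_mono {k} (n m : degT k) : dle n m -> (bnd n <= bnd m)%N.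
Proof. move=> /dleP h; rewrite /bnd; apply: leq_sum => i _; exact: h. Qed.

Definition pchain {k} {L : kgraph k} (mu : Mor L) : degT k -> Mor L :=
  fun n => pre (chain mu (bnd n)) n.

Lemma pchain_le {k} {L : kgraph k} (HL : row_finite_no_sources L) (mu : Mor L) n j :
  (bnd n <= j)%N -> dle n (deg (chain mu j)).
Proof.
move=> h; rewrite chain_deg //; apply: dle_trans (bnd_le n) _.
apply/dleP=> i; rewrite !ffunE; lia.
Qed.

Lemma pchain_PS {k} {L : kgraph k} (HL : row_finite_no_sources L) (mu : Mor L) :
  isPS (pchain mu).
Proof.
split=> [n|n m hnm]; rewrite /pchain.
  by rewrite deg_pre // pchain_le.
rewrite pre_pre //; last exact: pchain_le.
apply: chain_pre => //; first exact: bnd_mono.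
exact: pchain_le.
Qed.

Lemma pchain_mu {k} {L : kgraph k} (HL : row_finite_no_sources L) (mu : Mor L) :
  pchain mu (deg mu) = mu.
Proof.
rewrite /pchain (@chain_pre _ _ HL mu 0) //= ?pre_full //; exact: dle_refl.
Qed.

Local Open Scope ring_scope.

Notation "x ** y" := (nua_mul x y) (at level 40, left associativity).

Lemma nmulr0 {R : comNzRingType} {A : nualg R} (x : A) : x ** 0 = 0.
Proof. by have := nua_mulZr 0 x 0; rewrite !scale0r. Qed.
Lemma nmul0r {R : comNzRingType} {A : nualg R} (x : A) : 0 ** x = 0.
Proof. by have := nua_mulZl 0 0 x; rewrite !scale0r. Qed.

Lemma nmul_sumr {R : comNzRingType} {A : nualg R} {I : Type} (x : A) (e : seq I) (F : I -> A) :
  x ** (\sum_(i <- e) F i) = \sum_(i <- e) (x ** F i).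
Proof.
elim: e => [|a e IH]; first by rewrite !big_nil nmulr0.
by rewrite !big_cons nua_mulDr IH.
Qed.
Lemma nmul_suml {R : comNzRingType} {A : nualg R} {I : Type} (x : A) (e : seq I) (F : I -> A) :
  (\sum_(i <- e) F i) ** x = \sum_(i <- e) (F i ** x).
Proof.
elim: e => [|a e IH]; first by rewrite !big_nil nmul0r.
by rewrite !big_cons nua_mulDl IH.
Qed.

Lemma kp_conv {k} {L : kgraph k} {R : comNzRingType} {A : nualg R} {p : Obj L -> A} {s ss : Mor L -> A}
  (H : is_KP_family p s ss) (l : Mor L) : deg l = dzero k ->
  [/\ s l = p (rg l), ss l = p (rg l) & sr l = rg l].
Proof.
move=> h; have [hc _ _ _ _] := H; have e := deg0_idm h.
have [e1 e2] := hc (rg l); rewrite -e in e1 e2; split => //.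
by rewrite {1}e sr_idm.
Qed.

Lemma kp_pp {k} {L : kgraph k} {R : comNzRingType} {A : nualg R} {p : Obj L -> A} {s ss : Mor L -> A}
  (H : is_KP_family p s ss) v w : p v ** p w = if v == w then p v else 0.
Proof. by have [_ h _ _ _] := H. Qed.
Lemma kp_pp1 {k} {L : kgraph k} {R : comNzRingType} {A : nualg R} {p : Obj L -> A} {s ss : Mor L -> A}
  (H : is_KP_family p s ss) v : p v ** p v = p v.
Proof. by rewrite (kp_pp H) eqxx. Qed.


Lemma kp_ps {k} {L : kgraph k} {R : comNzRingType} {A : nualg R} {p : Obj L -> A} {s ss : Mor L -> A}
  (H : is_KP_family p s ss) (l : Mor L) :
  [/\ p (rg l) ** s l = s l, s l ** p (sr l) = s l, p (sr l) ** ss l = ss l & ss l ** p (rg l) = ss l].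
Proof.
have [_ _ [_ h] _ _] := H.
case: (eqVneq (deg l) (dzero k)) => [hd|hd]; last exact: h.
have [e1 e2 e3] := kp_conv H hd.
by rewrite e1 e2 e3 (kp_pp1 H).
Qed.

Lemma kp_s_comp {k} {L : kgraph k} {R : comNzRingType} {A : nualg R} {p : Obj L -> A} {s ss : Mor L -> A}
  (H : is_KP_family p s ss) (l m : Mor L) : sr l = rg m ->
  s (kcomp l m) = s l ** s m /\ ss (kcomp l m) = ss m ** ss l.
Proof.
move=> hlm; have [_ _ [h _] _ _] := H.
case: (eqVneq (deg l) (dzero k)) => [hd|hd].
  have [e1 e2 e3] := kp_conv H hd.
  have el : l = idm (rg m) by rewrite {1}(deg0_idm hd) -e3 hlm.
  have [q1 _ _ q4] := kp_ps H m.
  by rewrite e1 e2 -e3 hlm el comp_idl q1 q4.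
case: (eqVneq (deg m) (dzero k)) => [hd'|hd'].
  have [e1 e2 e3] := kp_conv H hd'.
  have em : m = idm (sr l) by rewrite {1}(deg0_idm hd') hlm.
  have [_ q2 q3 _] := kp_ps H l.
  by rewrite e1 e2 -hlm em comp_idr q2 q3.
by have [-> ->] := h l m hd hd' (esym hlm).
Qed.

Lemma kp3g {k} {L : kgraph k} {R : comNzRingType} {A : nualg R} {p : Obj L -> A} {s ss : Mor L -> A}
  (H : is_KP_family p s ss) (l m : Mor L) : deg l = deg m ->
  ss l ** s m = if l == m then p (sr l) else 0.
Proof.
move=> hlm; have [_ _ _ h _] := H.
case: (eqVneq (deg l) (dzero k)) => [hd|hd]; last exact: h.
have hd' : deg m = dzero k by rewrite -hlm.
have [e1 e2 e3] := kp_conv H hd; have [f1 f2 f3] := kp_conv H hd'.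
rewrite e2 f1 e3 (kp_pp H).
case: (eqVneq (rg l) (rg m)) => [er|ne].
  by rewrite (deg0_idm hd) (deg0_idm hd') er eqxx.
case: eqP => // elm; by rewrite elm eqxx in ne.
Qed.

Lemma kp_proj_s {k} {L : kgraph k} {R : comNzRingType} {A : nualg R} {p : Obj L -> A} {s ss : Mor L -> A}
  (H : is_KP_family p s ss) (mu nu : Mor L) : dle (deg mu) (deg nu) ->
  (s mu ** ss mu) ** s nu = if pre nu (deg mu) == mu then s nu else 0.
Proof.
move=> hle; have [f1 f2 f3 f4] := fpairP hle.
have [es _] := kp_s_comp H f1.
rewrite -f4 in es; rewrite {1}es.
rewrite -nua_mulA (nua_mulA (ss mu)) (kp3g H) ?f2 // eq_sym.
case: eqP => [e|_]; last by rewrite !nmul0r nmulr0.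
have [_ q2 _ _] := kp_ps H mu.
by rewrite nua_mulA q2 es e.
Qed.

Lemma kp_ss_proj {k} {L : kgraph k} {R : comNzRingType} {A : nualg R} {p : Obj L -> A} {s ss : Mor L -> A}
  (H : is_KP_family p s ss) (mu nu : Mor L) : dle (deg mu) (deg nu) ->
  ss nu ** (s mu ** ss mu) = if pre nu (deg mu) == mu then ss nu else 0.
Proof.
move=> hle; have [f1 f2 f3 f4] := fpairP hle.
have [_ es] := kp_s_comp H f1.
rewrite -f4 in es; rewrite {1}es.
rewrite nua_mulA -(nua_mulA (ss _)) (kp3g H) ?f2 //.
case: eqP => [e|_]; last by rewrite nmulr0 !nmul0r.
have [_ _ _ q4] := kp_ps H (suf nu (deg mu)).
by rewrite f1 q4 es e.
Qed.

Lemma kp_p_s {k} {L : kgraph k} {R : comNzRingType} {A : nualg R} {p : Obj L -> A} {s ss : Mor L -> A}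
  (H : is_KP_family p s ss) v (l : Mor L) : p v ** s l = if rg l == v then s l else 0.
Proof.
have [q1 _ _ _] := kp_ps H l.
rewrite -{1}q1 nua_mulA (kp_pp H); case: (eqVneq v (rg l)) => [e|_].
  by rewrite e q1.
by rewrite nmul0r.
Qed.
Lemma kp_s_p {k} {L : kgraph k} {R : comNzRingType} {A : nualg R} {p : Obj L -> A} {s ss : Mor L -> A}
  (H : is_KP_family p s ss) v (l : Mor L) : s l ** p v = if sr l == v then s l else 0.
Proof.
have [_ q2 _ _] := kp_ps H l.
rewrite -{1}q2 -nua_mulA (kp_pp H); case: (eqVneq (sr l) v) => [e|_].
  by rewrite q2.
by rewrite nmulr0.
Qed.
Lemma kp_ss_p {k} {L : kgraph k} {R : comNzRingType} {A : nualg R} {p : Obj L -> A} {s ss : Mor L -> A}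
  (H : is_KP_family p s ss) v (l : Mor L) : ss l ** p v = if rg l == v then ss l else 0.
Proof.
have [_ _ _ q4] := kp_ps H l.
rewrite -{1}q4 -nua_mulA (kp_pp H); case: (eqVneq (rg l) v) => [e|_].
  by rewrite q4.
by rewrite nmulr0.
Qed.

Lemma kp_sss {k} {L : kgraph k} {R : comNzRingType} {A : nualg R} {p : Obj L -> A} {s ss : Mor L -> A}
  (H : is_KP_family p s ss) (l : Mor L) : s l ** ss l ** s l = s l.
Proof.
rewrite -nua_mulA (kp3g H) // eqxx; by have [_ q2 _ _] := kp_ps H l.
Qed.

Lemma kp4x {k} {L : kgraph k} {R : comNzRingType} {A : nualg R} {p : Obj L -> A} {s ss : Mor L -> A}
  (H : is_KP_family p s ss) (HL : row_finite_no_sources L) v (n : degT k) : n != dzero k ->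
  exists e : seq (Mor L), (forall l, (l \in e) = (rg l == v) && (deg l == n)) /\
     p v = \sum_(l <- e) (s l ** ss l).
Proof.
move=> hn; have [_ _ _ _ h4] := H; have [e [he _ hm]] := HL v n.
exists e; split; [exact: hm | exact: h4 hn e he hm].
Qed.

Lemma kp_normal {k} {L : kgraph k} {R : comNzRingType} {A : nualg R} {p : Obj L -> A} {s ss : Mor L -> A}
  (H : is_KP_family p s ss) (a b : Mor L) : sr a = sr b ->
  (s a ** ss b) ** (s b ** ss a) = s a ** ss a.
Proof.
move=> hab; rewrite nua_mulA -(nua_mulA (s a)) (kp3g H) // eqxx -hab.
by have [_ -> _ _] := kp_ps H a.
Qed.

Lemma p2_p1 {k} {L : kgraph k} {R : comNzRingType} {A : nualg R} {p : Obj L -> A} {s ss : Mor L -> A}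
  (H : is_KP_family p s ss) (a b g : Mor L) : sr a = sr b -> rg g = sr a ->
  s a ** ss a = s b ** ss b ->
  (s a ** ss b) ** (s (kcomp b g) ** ss (kcomp b g)) = (s (kcomp b g) ** ss (kcomp b g)) ** (s a ** ss b) ->
  s (kcomp a g) ** ss (kcomp a g) = s (kcomp b g) ** ss (kcomp b g).
Proof.
move=> hab hg he hc.
have hga : sr a = rg g by []. have hgb : sr b = rg g by rewrite -hab.
have [sa ssa] := kp_s_comp H hga; have [sb ssb] := kp_s_comp H hgb.
set x := s a ** ss b; set xs := s b ** ss a; set y := s (kcomp b g) ** ss (kcomp b g).
have X1 : x ** y = s (kcomp a g) ** ss (kcomp b g).
  rewrite /x /y sb ssb sa !nua_mulA -(nua_mulA (s a)) (kp3g H) // eqxx.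
  have [_ q2 _ _] := kp_ps H a; by rewrite -hab q2.
have Y1 : y ** xs = s (kcomp b g) ** ss (kcomp a g).
  rewrite /xs /y ssb ssa !nua_mulA -(nua_mulA _ (ss b)) (kp3g H) // eqxx.
  have [_ _ _ q4] := kp_ps H g; by rewrite hgb -(nua_mulA _ (ss g)) q4.
have yy : y ** y = y by rewrite /y nua_mulA (kp_sss H).
have hsg : sr (kcomp a g) = sr (kcomp b g) by rewrite !sr_comp.
have e1 : s (kcomp a g) ** ss (kcomp a g) = (x ** y) ** (y ** xs).
  rewrite X1 Y1 nua_mulA -(nua_mulA _ (ss (kcomp b g))) (kp3g H) // eqxx -hsg.
  by have [_ -> _ _] := kp_ps H (kcomp a g).
have hc' : x ** y = y ** x := hc.
rewrite e1 -nua_mulA (nua_mulA y) yy nua_mulA hc' -nua_mulA /x /xs (kp_normal H hab) he.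
rewrite /y ssb -!nua_mulA (nua_mulA (ss b)) (kp3g H) // eqxx.
have [_ _ q3 _] := kp_ps H b; by rewrite q3.
Qed.

Lemma comm_term {k} {L : kgraph k} {R : comNzRingType} {A : nualg R} {p : Obj L -> A} {s ss : Mor L -> A}
  (H : is_KP_family p s ss) (al be mu : Mor L) :
  s al ** ss al = s be ** ss be -> dle (deg mu) (deg al) -> dle (deg mu) (deg be) ->
  (s mu ** ss mu) ** (s al ** ss be) = (s al ** ss be) ** (s mu ** ss mu).
Proof.
move=> he h1 h2.
have ea : s al = s be ** ss be ** s al by rewrite -he (kp_sss H).
rewrite -(nua_mulA (s al) (ss be)) (kp_ss_proj H) //.
rewrite ea !nua_mulA (kp_proj_s H) //.
case: eqP => _; last by rewrite !nmul0r nmulr0.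
by rewrite -ea.
Qed.

Lemma p1_comm {k} {L : kgraph k} {R : comNzRingType} {A : nualg R} {p : Obj L -> A} {s ss : Mor L -> A}
  (H : is_KP_family p s ss) (HL : row_finite_no_sources L) (a b : Mor L) : sr a = sr b ->
  (forall g : Mor L, rg g = sr a ->
      s (kcomp a g) ** ss (kcomp a g) = s (kcomp b g) ** ss (kcomp b g)) ->
  forall y, in_diag s ss y -> (s a ** ss b) ** y = y ** (s a ** ss b).
Proof.
move=> hab P1.
have he : s a ** ss a = s b ** ss b.
  have := P1 (idm (sr a)) (rg_idm _); by rewrite comp_idr [in kcomp b _]hab comp_idr.
move=> y; elim=> [mu| |y1 y2 _ IH1 _ IH2|c y1 _ IH|y1 y2 _ IH1 _ IH2].
- case: (eqVneq (deg mu) (dzero k)) => [hd|hd].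
    have [e1 e2 _] := kp_conv H hd; rewrite e1 e2 (kp_pp1 H).
    set v := rg mu.
    have ex : s a ** ss b = s b ** ss b ** (s a ** ss b) by rewrite nua_mulA -he (kp_sss H).
    rewrite -nua_mulA (kp_ss_p H) ex !nua_mulA (kp_p_s H).
    case: eqP => _; last by rewrite !nmul0r nmulr0.
    by rewrite -(nua_mulA (s b ** ss b)) -ex.
  have [e [hm hp]] := kp4x H HL (sr a) hd.
  have ex : s a ** ss b = \sum_(l <- e) (s (kcomp a l) ** ss (kcomp b l)).
    have [_ q2 _ _] := kp_ps H a.
    rewrite -{1}q2 hp nmul_sumr nmul_suml; apply: eq_big_seq => l.
    rewrite hm => /andP[/eqP hl _].
    have [-> _] := kp_s_comp H (esym hl).
    have [_ ->] := kp_s_comp (l := b) (m := l) H (ltac:(by rewrite hl hab)).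
    by rewrite !nua_mulA.
  rewrite ex nmul_sumr nmul_suml; apply: eq_big_seq => l.
  rewrite hm => /andP[/eqP hl /eqP hdl].
  symmetry; apply: (comm_term H).
  + by apply: P1.
  + rewrite deg_comp ?hl // hdl; exact: dle_addl.
  + rewrite deg_comp ?hl -?hab // hdl; exact: dle_addl.
- by rewrite nmulr0 nmul0r.
- by rewrite nua_mulDr nua_mulDl IH1 IH2.
- by rewrite nua_mulZr nua_mulZl IH.
- by rewrite nua_mulA IH1 -nua_mulA IH2 nua_mulA.
Qed.

Lemma p1_normal {k} {L : kgraph k} {R : comNzRingType} {A : nualg R} {p : Obj L -> A} {s ss : Mor L -> A}
  (H : is_KP_family p s ss) (a b : Mor L) : sr a = sr b ->
  s a ** ss a = s b ** ss b ->
  (s a ** ss b) ** (s b ** ss a) = (s b ** ss a) ** (s a ** ss b).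
Proof. by move=> hab he; rewrite (kp_normal H hab) (kp_normal H (esym hab)). Qed.

Lemma p2_normal {k} {L : kgraph k} {R : comNzRingType} {A : nualg R} {p : Obj L -> A} {s ss : Mor L -> A}
  (H : is_KP_family p s ss) (a b : Mor L) : sr a = sr b ->
  (s a ** ss b) ** (s b ** ss a) = (s b ** ss a) ** (s a ** ss b) ->
  s a ** ss a = s b ** ss b.
Proof. by move=> hab; rewrite (kp_normal H hab) (kp_normal H (esym hab)). Qed.

Definition P3 {k} {L : kgraph k} (a b : Mor L) : Prop :=
  forall g : degT k -> degT k -> Mor L, is_infpath g ->
      infpath_range g = sr a ->
      forall y z, is_concat a g y -> is_concat b g z -> infpath_eq y z.

Lemma P3_sym {k} {L : kgraph k} (a b : Mor L) : sr a = sr b -> P3 a b -> P3 b a.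
Proof.
move=> hab h g hg hr y z hy hz q r hqr; symmetry; apply: (h g hg) => //; by rewrite hab.
Qed.

Lemma conc_ps {k} {L : kgraph k} (a : Mor L) (c : degT k -> Mor L) :
  isPS c -> sr a = psr c -> is_concat a (psfun c) (psfun (pconc a c)).
Proof.
move=> hc ha; split; first exact/psfun_inf/pconc_PS.
move=> n hn; rewrite !psfun_0 -{1}(dsubK hn) pconc_at //.
Qed.

Lemma comb {k} {L : kgraph k} (HL : row_finite_no_sources L) (a b g l : Mor L) :
  sr a = sr b -> P3 a b -> rg g = sr a -> rg l = sr g ->
  dle (deg (kcomp b g)) (deg (kcomp (kcomp a g) l)) ->
  pre (kcomp (kcomp a g) l) (deg (kcomp b g)) = kcomp b g.
Proof.
move=> hab h3 hg hl hle.
set mu := kcomp g l.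
have hc := pchain_PS HL mu.
set c := pchain mu.
have hmu : c (deg mu) = mu by exact: pchain_mu.
have hpsr : psr c = sr a by rewrite -(@ps_rg _ _ c (deg mu) hc) hmu rg_comp ?hl.
have hx := psfun_inf hc.
have hxr : infpath_range (psfun c) = sr a by rewrite /infpath_range psfun_0 -hpsr /psr.
have hy := conc_ps hc (esym hpsr).
have hz := conc_ps (a := b) hc (ltac:(by rewrite hpsr)).
have eq := h3 _ hx hxr _ _ hy hz.
have eN N : pconc a c N = pconc b c N.
  by have := eq (dzero k) N (dle0 N); rewrite !psfun_0.
have [hc1 hc2] := pconc_PS hc (esym hpsr).
have e1 : kcomp (kcomp a g) l = pconc a c (dadd (deg a) (deg mu)).
  by rewrite pconc_at // hmu comp_assoc ?hl.
have hdg : dle (deg g) (deg mu) by rewrite /mu deg_comp ?hl // dle_addr.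
have hN : deg (kcomp (kcomp a g) l) = dadd (deg a) (deg mu) by rewrite e1 hc1.
rewrite e1 hc2; last by rewrite -hN.
rewrite eN deg_comp ?hab ?hg // pconc_at; last by rewrite hpsr hab.
have [hc3 hc4] := hc.
  rewrite /c -(hc4 _ _ hdg) -/c hmu /mu; by have [-> _] := preE (esym hl).
exact: hc.
Qed.

Lemma expand {k} {L : kgraph k} {R : comNzRingType} {A : nualg R} {p : Obj L -> A} {s ss : Mor L -> A}
  (H : is_KP_family p s ss) (HL : row_finite_no_sources L) (mu : Mor L) (n : degT k) : n != dzero k ->
  exists e : seq (Mor L), (forall l, (l \in e) = (rg l == sr mu) && (deg l == n)) /\
     s mu ** ss mu = \sum_(l <- e) (s (kcomp mu l) ** ss (kcomp mu l)).
Proof.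
move=> hn; have [e [hm hp]] := kp4x H HL (sr mu) hn.
exists e; split => //.
have [_ q2 _ _] := kp_ps H mu.
rewrite -{1}q2 hp nmul_sumr nmul_suml; apply: eq_big_seq => l.
rewrite hm => /andP[/eqP hl _].
have [-> ->] := kp_s_comp H (esym hl).
by rewrite !nua_mulA.
Qed.

Lemma half {k} {L : kgraph k} {R : comNzRingType} {A : nualg R} {p : Obj L -> A} {s ss : Mor L -> A}
  (H : is_KP_family p s ss) (HL : row_finite_no_sources L) (a b g : Mor L) :
  (0 < k)%N -> sr a = sr b -> P3 a b -> rg g = sr a ->
  (s (kcomp b g) ** ss (kcomp b g)) ** (s (kcomp a g) ** ss (kcomp a g)) = s (kcomp a g) ** ss (kcomp a g) /\
  (s (kcomp a g) ** ss (kcomp a g)) ** (s (kcomp b g) ** ss (kcomp b g)) = s (kcomp a g) ** ss (kcomp a g).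
Proof.
move=> hk hab h3 hg.
set n := dadd (dadd (deg a) (deg b)) (dscale k 1).
have hn : n != dzero k.
  apply/eqP => /(congr1 (fun f : degT k => f (Ordinal hk))); rewrite !ffunE; lia.
have [e [hm hE]] := expand H HL (kcomp a g) hn.
have hle l : l \in e -> dle (deg (kcomp b g)) (deg (kcomp (kcomp a g) l)).
  rewrite hm => /andP[/eqP hl /eqP hd].
  rewrite !deg_comp ?hab ?hg ?hl ?sr_comp ?hd //; apply/dleP => i; rewrite !ffunE; lia.
have hpre l : l \in e -> pre (kcomp (kcomp a g) l) (deg (kcomp b g)) = kcomp b g.
  move=> hl; apply: comb => //; last exact: hle.
  by move: hl; rewrite hm sr_comp ?hg // => /andP[/eqP ->].
split; rewrite {2}hE hE.
- rewrite nmul_sumr; apply: eq_big_seq => l hl.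
  by rewrite nua_mulA (kp_proj_s H) ?hle // hpre // eqxx.
- rewrite nmul_suml; apply: eq_big_seq => l hl.
  by rewrite -nua_mulA (kp_ss_proj H) ?hle // hpre // eqxx.
Qed.

Lemma p3_p1 {k} {L : kgraph k} {R : comNzRingType} {A : nualg R} {p : Obj L -> A} {s ss : Mor L -> A}
  (H : is_KP_family p s ss) (HL : row_finite_no_sources L) (a b : Mor L) :
  sr a = sr b -> P3 a b ->
  forall g : Mor L, rg g = sr a ->
      s (kcomp a g) ** ss (kcomp a g) = s (kcomp b g) ** ss (kcomp b g).
Proof.
move=> hab h3 g hg.
case: (posnP k) => hk.
  have ea : a = idm (rg a) by apply: deg0_idm; move: (deg a); rewrite hk => d; exact: dk0.
  have eb : b = idm (rg b) by apply: deg0_idm; move: (deg b); rewrite hk => d; exact: dk0.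
  have : sr a = sr b := hab; rewrite {1}ea {1}eb !sr_idm => e.
  by rewrite ea eb e.
have [h1 h2] := half H HL hk hab h3 hg.
have hg' : rg g = sr b by rewrite -hab.
have [h1' h2'] := half H HL hk (esym hab) (P3_sym hab h3) hg'.
by rewrite -h1 h2'.
Qed.

Definition X {k} (L : kgraph k) := {c : degT k -> Mor L | isPS c}.

Lemma Xeq {k} {L : kgraph k} (x y : X L) : proj1_sig x = proj1_sig y -> x = y.
Proof.
move: x y => [x hx] [y hy] /= e; subst y; f_equal; apply: proof_irrelevance.
Qed.

Definition shiftX {k} {L : kgraph k} (m : degT k) (x : X L) : X L :=
  exist _ (pshift m (proj1_sig x)) (pshift_PS m (proj2_sig x)).

Definition concatX {k} {L : kgraph k} (l : Mor L) (x : X L) : X L :=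
  match @eqP _ (sr l) (psr (proj1_sig x)) with
  | ReflectT h => exist _ (pconc l (proj1_sig x)) (pconc_PS (proj2_sig x) h)
  | ReflectF _ => x
  end.

Lemma concatX_val {k} {L : kgraph k} (l : Mor L) (x : X L) :
  sr l = psr (proj1_sig x) -> proj1_sig (concatX l x) = pconc l (proj1_sig x).
Proof. rewrite /concatX; case: eqP => //. Qed.

Lemma conc_shiftX {k} {L : kgraph k} (l : Mor L) m (x : X L) :
  proj1_sig x m = l -> concatX l (shiftX m x) = x.
Proof.
move=> e; have hx := proj2_sig x.
have h : sr l = psr (proj1_sig (shiftX m x)) by rewrite /= psr_shift // e.
apply: Xeq; rewrite concatX_val //= -e conc_shift //.
Qed.

Lemma shift_concX {k} {L : kgraph k} (l : Mor L) (x : X L) :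
  sr l = psr (proj1_sig x) -> shiftX (deg l) (concatX l x) = x.
Proof.
move=> h; apply: Xeq; rewrite /= concatX_val // shift_conc //; exact: proj2_sig.
Qed.

Record Op {k} (L : kgraph k) (R : comNzRingType) := MkOp {
  opf : (X L -> R) -> (X L -> R);
  opA : forall f g c, opf (fun z => f z + g z) c = opf f c + opf g c;
  opZ : forall (r : R) f c, opf (fun z => r * f z) c = r * opf f c
}.
Arguments MkOp {k L R}.
Arguments opf {k L R}.

Lemma Op_eq {k} {L : kgraph k} {R : comNzRingType} (T U : Op L R) :
  (forall f c, opf T f c = opf U f c) -> T = U.
Proof.
move: T U => [T a1 z1] [U a2 z2] /= h.
have e : T = U by apply: functional_extensionality => f; apply: functional_extensionality => c.
subst U; f_equal; apply: proof_irrelevance.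
Qed.

Lemma opf_fun {k} {L : kgraph k} {R : comNzRingType} (T : Op L R) f g :
  opf T (fun z => f z + g z) = fun c => opf T f c + opf T g c.
Proof. apply: functional_extensionality => c; exact: opA. Qed.
Lemma opf_funZ {k} {L : kgraph k} {R : comNzRingType} (T : Op L R) (r : R) f :
  opf T (fun z => r * f z) = fun c => r * opf T f c.
Proof. apply: functional_extensionality => c; exact: opZ. Qed.

Definition zeroO {k} (L : kgraph k) (R : comNzRingType) : Op L R :=
  MkOp (fun f c => 0) (fun f g c => esym (addr0 _)) (fun r f c => esym (mulr0 _)).
Definition addO {k} {L : kgraph k} {R : comNzRingType} (T U : Op L R) : Op L R.
Proof.
refine (MkOp (fun f c => opf T f c + opf U f c) _ _).
- by move=> f g c; rewrite !opA addrACA.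
- by move=> r f c; rewrite !opZ mulrDr.
Defined.
Definition oppO {k} {L : kgraph k} {R : comNzRingType} (T : Op L R) : Op L R.
Proof.
refine (MkOp (fun f c => - opf T f c) _ _).
- by move=> f g c; rewrite !opA opprD.
- by move=> r f c; rewrite !opZ mulrN.
Defined.
Definition scaleO {k} {L : kgraph k} {R : comNzRingType} (r : R) (T : Op L R) : Op L R.
Proof.
refine (MkOp (fun f c => r * opf T f c) _ _).
- by move=> f g c; rewrite !opA mulrDr.
- by move=> r' f c; rewrite !opZ mulrCA.
Defined.
Definition mulO {k} {L : kgraph k} {R : comNzRingType} (T U : Op L R) : Op L R.
Proof.
refine (MkOp (fun f c => opf T (opf U f) c) _ _).
- by move=> f g c; rewrite opf_fun opA.
- by move=> r f c; rewrite opf_funZ opZ.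
Defined.

HB.instance Definition _ {k} (L : kgraph k) (R : comNzRingType) := gen_eqMixin (Op L R).
HB.instance Definition _ {k} (L : kgraph k) (R : comNzRingType) := gen_choiceMixin (Op L R).

Lemma addOA {k} {L : kgraph k} {R : comNzRingType} : associative (@addO k L R).
Proof. by move=> T U V; apply: Op_eq => f c /=; rewrite addrA. Qed.
Lemma addOC {k} {L : kgraph k} {R : comNzRingType} : commutative (@addO k L R).
Proof. by move=> T U; apply: Op_eq => f c /=; rewrite addrC. Qed.
Lemma add0O {k} {L : kgraph k} {R : comNzRingType} : left_id (zeroO L R) (@addO k L R).
Proof. by move=> T; apply: Op_eq => f c /=; rewrite add0r. Qed.
Lemma addNO {k} {L : kgraph k} {R : comNzRingType} : left_inverse (zeroO L R) (@oppO k L R) (@addO k L R).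
Proof. by move=> T; apply: Op_eq => f c /=; rewrite addNr. Qed.

HB.instance Definition _ {k} (L : kgraph k) (R : comNzRingType) :=
  GRing.isZmodule.Build (Op L R) addOA addOC add0O addNO.

Lemma scaleOA {k} {L : kgraph k} {R : comNzRingType} (a b : R) (T : Op L R) :
  scaleO a (scaleO b T) = scaleO (a * b) T.
Proof. by apply: Op_eq => f c /=; rewrite mulrA. Qed.
Lemma scale1O {k} {L : kgraph k} {R : comNzRingType} : left_id (1 : R) (@scaleO k L R).
Proof. by move=> T; apply: Op_eq => f c /=; rewrite mul1r. Qed.
Lemma scaleODr {k} {L : kgraph k} {R : comNzRingType} : right_distributive (@scaleO k L R) +%R.
Proof. by move=> a T U; apply: Op_eq => f c /=; rewrite mulrDr. Qed.
Lemma scaleODl {k} {L : kgraph k} {R : comNzRingType} (T : Op L R) :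
  {morph (@scaleO k L R)^~ T: a b / a + b}.
Proof. by move=> a b; apply: Op_eq => f c /=; rewrite mulrDl. Qed.

HB.instance Definition _ {k} (L : kgraph k) (R : comNzRingType) :=
  GRing.Zmodule_isLmodule.Build R (Op L R) scaleOA scale1O scaleODr scaleODl.

Lemma opf_add {k} {L : kgraph k} {R : comNzRingType} (T U : Op L R) f c :
  opf (T + U) f c = opf T f c + opf U f c.
Proof. by []. Qed.
Lemma opf_zero {k} {L : kgraph k} {R : comNzRingType} f c : opf (0 : Op L R) f c = 0.
Proof. by []. Qed.
Lemma opf_scale {k} {L : kgraph k} {R : comNzRingType} (r : R) (T : Op L R) f c :
  opf (r *: T) f c = r * opf T f c.
Proof. by []. Qed.

Lemma mulOA {k} {L : kgraph k} {R : comNzRingType} : associative (@mulO k L R).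
Proof. by move=> T U V; apply: Op_eq => f c. Qed.
Lemma mulODl {k} {L : kgraph k} {R : comNzRingType} : left_distributive (@mulO k L R) +%R.
Proof. by move=> T U V; apply: Op_eq => f c. Qed.
Lemma mulODr {k} {L : kgraph k} {R : comNzRingType} : right_distributive (@mulO k L R) +%R.
Proof. by move=> T U V; apply: Op_eq => f c /=; rewrite opf_fun. Qed.
Lemma mulOZl {k} {L : kgraph k} {R : comNzRingType} (r : R) (T U : Op L R) :
  mulO (r *: T) U = r *: mulO T U.
Proof. by apply: Op_eq => f c. Qed.
Lemma mulOZr {k} {L : kgraph k} {R : comNzRingType} (r : R) (T U : Op L R) :
  mulO T (r *: U) = r *: mulO T U.
Proof. apply: Op_eq => f c; change (opf T (fun z => r * opf U f z) c = r * opf T (opf U f) c); exact: opZ. Qed.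

Definition Balg {k} (L : kgraph k) (R : comNzRingType) : nualg R :=
  @NUAlg R (Op L R) mulO mulOA mulODl mulODr mulOZl mulOZr.

Definition PO {k} {L : kgraph k} {R : comNzRingType} (v : Obj L) : Op L R.
Proof.
refine (MkOp (fun f c => if psr (proj1_sig c) == v then f c else 0) _ _).
- by move=> f g c; case: eqP => _ //; rewrite addr0.
- by move=> r f c; case: eqP => _ //; rewrite mulr0.
Defined.
Definition SO {k} {L : kgraph k} {R : comNzRingType} (l : Mor L) : Op L R.
Proof.
refine (MkOp (fun f c => if proj1_sig c (deg l) == l then f (shiftX (deg l) c) else 0) _ _).
- by move=> f g c; case: eqP => _ //; rewrite addr0.
- by move=> r f c; case: eqP => _ //; rewrite mulr0.
Defined.
Definition SsO {k} {L : kgraph k} {R : comNzRingType} (l : Mor L) : Op L R.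
Proof.
refine (MkOp (fun f c => if psr (proj1_sig c) == sr l then f (concatX l c) else 0) _ _).
- by move=> f g c; case: eqP => _ //; rewrite addr0.
- by move=> r f c; case: eqP => _ //; rewrite mulr0.
Defined.

Definition Bp {k} {L : kgraph k} {R : comNzRingType} (v : Obj L) : Balg L R := PO v.
Definition Bs {k} {L : kgraph k} {R : comNzRingType} (l : Mor L) : Balg L R :=
  if deg l == dzero k then PO (rg l) else SO l.
Definition Bss {k} {L : kgraph k} {R : comNzRingType} (l : Mor L) : Balg L R :=
  if deg l == dzero k then PO (rg l) else SsO l.

Lemma opf_mul {k} {L : kgraph k} {R : comNzRingType} (T U : Balg L R) f c :
  opf (nua_mul T U) f c = opf T (opf U f) c.
Proof. by []. Qed.

Lemma opf_sum {k} {L : kgraph k} {R : comNzRingType} {I : Type} (e : seq I) (F : I -> Balg L R) f c :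
  opf (\sum_(i <- e) F i) f c = \sum_(i <- e) opf (F i) f c.
Proof.
elim: e => [|a e IH]; first by rewrite !big_nil.
by rewrite !big_cons -IH.
Qed.

Lemma sum_ind {R : comNzRingType} {T : eqType} (e : seq T) (x : T) (r : R) :
  uniq e -> \sum_(l <- e) (if x == l then r else 0) = if x \in e then r else 0.
Proof.
elim: e => [|a e IH] /=; first by rewrite big_nil.
move=> /andP[ha he]; rewrite big_cons IH // in_cons.
case: eqP => [->|_] /=; last by rewrite add0r.
by rewrite (negbTE ha) addr0.
Qed.

Lemma shift_rg {k} {L : kgraph k} (x : X L) m : psr (proj1_sig (shiftX m x)) = sr (proj1_sig x m).
Proof. by rewrite /shiftX /=; apply: psr_shift; exact: proj2_sig. Qed.

Lemma Bfam {k} {L : kgraph k} {R : comNzRingType} : is_KP_family (@Bp k L R) Bs Bss.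
Proof.
split.
- by move=> v; rewrite /Bs /Bss deg_idm eqxx rg_idm; split.
- move=> v w; apply: Op_eq => f c; rewrite opf_mul /=.
  case: (eqVneq v w) => [e|ne]; first by rewrite -e /=; case: eqP.
  case: eqP => [e|_] //; case: eqP => // e'; by rewrite -e -e' eqxx in ne.
- split.
  + move=> l m hl hm hlm.
    have hlm0 : deg (kcomp l m) != dzero k.
      apply: contra hl => /eqP; rewrite deg_comp -?hlm // => h; apply/eqP.
      apply: dE => i; have := congr1 (fun f : degT k => f i) h; rewrite !ffunE; lia.
    rewrite /Bs /Bss (negbTE hl) (negbTE hm) (negbTE hlm0); split; apply: Op_eq => f c.
    * rewrite opf_mul /=.
      have hc := proj2_sig c; set cc := proj1_sig c.
      have [hc1 hc2] := hc.
      have e1 : cc (deg l) = pre (cc (dadd (deg l) (deg m))) (deg l) by rewrite hc2 // dle_addr.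
      rewrite e1 /pshift deg_comp -?hlm //.
      have hd : dle (deg l) (deg (cc (dadd (deg l) (deg m)))) by rewrite hc1 dle_addr.
      have [q1 q2 q3 q4] := fpairP hd.
      have eS : shiftX (deg m) (shiftX (deg l) c) = shiftX (dadd (deg l) (deg m)) c.
        by apply: Xeq; rewrite /= shift_shift.
      case: (eqVneq (cc (dadd (deg l) (deg m))) (kcomp l m)) => [E|ne].
        have [E1 E2] := preE (esym hlm); rewrite E E1 E2 !eqxx eS //.
      case: eqP => [E1|] //; case: eqP => [E2|] //.
      by rewrite q4 E1 E2 eqxx in ne.
    * rewrite opf_mul /= sr_comp -?hlm //.
      case: eqP => [h|] //.
      rewrite concatX_val // psr_conc ?hlm ?eqxx; last 2 first.
        exact: proj2_sig. by [].
      have hx : sr l = psr (proj1_sig (concatX m c)) by rewrite concatX_val // psr_conc //; exact: proj2_sig.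
      have hlm' : sr (kcomp l m) = psr (proj1_sig c) by rewrite sr_comp -?hlm.
      congr f; apply: Xeq; rewrite (concatX_val hx) (concatX_val (esym h)) (concatX_val hlm').
      rewrite conc_conc //; exact: proj2_sig.
  + move=> l hl; rewrite /Bs /Bss (negbTE hl); split; apply: Op_eq => f c; rewrite opf_mul /=.
    * case: (eqVneq (proj1_sig c (deg l)) l) => [e|_]; last by case: eqP.
      by rewrite -e ps_rg ?eqxx //; exact: proj2_sig.
    * case: eqP => [e|] //; rewrite psr_shift ?e ?eqxx //; exact: proj2_sig.
    * by case: eqP.
    * case: eqP => [e|] //; by rewrite concatX_val // psr_conc ?eqxx //; exact: proj2_sig.
- move=> l m hl hlm; rewrite /Bs /Bss (negbTE hl) -hlm (negbTE hl).
  apply: Op_eq => f c; rewrite opf_mul /=.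
  case: eqP => [e|ne]; last by case: (l == m) => //=; case: eqP.
  rewrite (concatX_val (esym e)) -hlm pconc_deg; [|exact: proj2_sig| by rewrite e].
  case: (eqVneq l m) => [_|ne] /=; last by [].
  by rewrite shift_concX ?e // eqxx.
- move=> v n hn e he hm; apply: Op_eq => f c; rewrite opf_sum /=.
  have hc := proj2_sig c; have [hc1 hc2] := hc.
  have -> : \sum_(l <- e) opf (nua_mul (Bs l) (Bss l)) f c =
            \sum_(l <- e) (if proj1_sig c n == l then f c else 0).
    apply: eq_big_seq => l; rewrite hm => /andP[_ /eqP hd].
    rewrite /Bs /Bss hd (negbTE hn) opf_mul /= -hd.
    case: (eqVneq (proj1_sig c (deg l)) l) => [E|ne] //.
    rewrite psr_shift ?E ?eqxx; [by rewrite conc_shiftX | exact: proj2_sig].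
  rewrite sum_ind // hm hc1 eqxx andbT ps_rg //.
Qed.

Lemma Bproj {k} {L : kgraph k} {R : comNzRingType} (l : Mor L) f (c : X L) :
  opf (nua_mul (Bs l : Balg L R) (Bss l)) f c = if proj1_sig c (deg l) == l then f c else 0.
Proof.
have hc := proj2_sig c; rewrite /Bs /Bss opf_mul.
case: eqP => [hd|hd] /=.
  rewrite hd ps_0 // [X in idm _ == X](deg0_idm hd).
  case: (eqVneq (psr (proj1_sig c)) (rg l)) => [e|ne]; first by rewrite e eqxx.
  case: eqP => // /(congr1 rg); rewrite !rg_idm => e; by rewrite e eqxx in ne.
case: (eqVneq (proj1_sig c (deg l)) l) => [E|ne] //.
rewrite psr_shift ?E ?eqxx; [by rewrite conc_shiftX | exact: proj2_sig].
Qed.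

Lemma p1_p3 {k} {L : kgraph k} {R : comNzRingType} {A : nualg R} {p : Obj L -> A} {s ss : Mor L -> A}
  (HA : is_KP_algebra p s ss) (a b : Mor L) : sr a = sr b ->
  (forall g : Mor L, rg g = sr a ->
      s (kcomp a g) ** ss (kcomp a g) = s (kcomp b g) ** ss (kcomp b g)) ->
  P3 a b.
Proof.
move=> hab P1 x hx hxr y z hy hz q r hqr.
case: (classic (y q r = z q r)) => // hne; exfalso.
have [hyi hyc] := hy; have [hzi hzc] := hz.
have [y1 y2 y3 y4] := hyi; have [z1 z2 z3 z4] := hzi.
have hne0 : y (dzero k) r <> z (dzero k) r.
  move=> e; apply: hne.
  rewrite -(y3 _ _ _ (dle0 q) hqr) -(z3 _ _ _ (dle0 q) hqr) in e.
  have h1 : sr (y (dzero k) q) = rg (y q r).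
    by rewrite (proj2 (y1 _ _ (dle0 q))) (proj1 (y1 _ _ hqr)).
  have h2 : sr (z (dzero k) q) = rg (z q r).
    by rewrite (proj2 (z1 _ _ (dle0 q))) (proj1 (z1 _ _ hqr)).
  have h3 : deg (y (dzero k) q) = deg (z (dzero k) q) by rewrite y4 ?z4 // dle0.
  by have [_ ->] := fact_uniq h1 h2 h3 e.
set g := x (dzero k) r.
have [x1 x2 x3 x4] := hx.
have hdg : deg g = r by rewrite x4 ?dsub0 // dle0.
have hg : rg g = sr a by rewrite (proj1 (x1 _ _ (dle0 r))).
have eY : kcomp a g = y (dzero k) (dadd (deg a) r).
  by rewrite hyc ?daddKsub // dle_addr.
have eZ : kcomp b g = z (dzero k) (dadd (deg b) r).
  by rewrite hzc ?daddKsub // dle_addr.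
have hcy := fun_PS hyi; have hcz := fun_PS hzi.
have HP1 := P1 g hg.
have [hfam huniv] := HA.
have [[phi [[_ _ phim] [_ phis phiss]]] _] := huniv (Balg L R) Bp Bs Bss Bfam.
have E := congr1 phi HP1; rewrite !phim !phis !phiss in E.
have := congr1 (fun T : Balg L R => opf T (fun _ => (1 : R)) (exist _ _ hcy)) E.
rewrite !Bproj /=.
rewrite [deg (kcomp a g)]deg_comp ?hg // hdg -eY eqxx.
rewrite [deg (kcomp b g)]deg_comp ?hg ?hab // hdg.
case: eqP => [e|_]; last by move/eqP; rewrite oner_eq0.
rewrite eZ in e.
move=> _; apply: hne0; have [_ hy2] := hcy; have [_ hz2] := hcz.
by rewrite -(hy2 _ _ (dle_addl (deg b) r)) -(hz2 _ _ (dle_addl (deg b) r)) /= e.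
Qed.

Unset Implicit Arguments.

Theorem proposition4p1 (k : nat) (L : kgraph k) (R : comNzRingType) (A : nualg R)
    (p : Obj L -> A) (s ss : Mor L -> A)
    (HL : row_finite_no_sources L) (HA : is_KP_algebra p s ss)
    (a b : Mor L) (hab : sr a = sr b) :
  let P1 := forall g : Mor L, rg g = sr a ->
      nua_mul (s (kcomp a g)) (ss (kcomp a g)) = nua_mul (s (kcomp b g)) (ss (kcomp b g)) in
  let P2 := let x := nua_mul (s a) (ss b) in
            let xstar := nua_mul (s b) (ss a) in
      nua_mul x xstar = nua_mul xstar x /\
      (forall y, in_diag s ss y -> nua_mul x y = nua_mul y x) in
  let P3 := forall g : degT k -> degT k -> Mor L, is_infpath g ->
      infpath_range g = sr a ->
      forall y z, is_concat a g y -> is_concat b g z -> infpath_eq y z in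
  (P1 <-> P2) /\ (P2 <-> P3).
Proof.
cbv zeta.
have H : is_KP_family p s ss by case: HA.
have p1p2 : (forall g : Mor L, rg g = sr a ->
      s (kcomp a g) ** ss (kcomp a g) = s (kcomp b g) ** ss (kcomp b g)) ->
    (s a ** ss b) ** (s b ** ss a) = (s b ** ss a) ** (s a ** ss b) /\
    (forall y, in_diag s ss y -> (s a ** ss b) ** y = y ** (s a ** ss b)).
  move=> P1; split; last exact: (p1_comm H HL hab P1).
  apply: (p1_normal H hab).
  have := P1 (idm (sr a)) (rg_idm _); by rewrite comp_idr [in kcomp b _]hab comp_idr.
have p2p1 : (s a ** ss b) ** (s b ** ss a) = (s b ** ss a) ** (s a ** ss b) /\
    (forall y, in_diag s ss y -> (s a ** ss b) ** y = y ** (s a ** ss b)) ->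
    (forall g : Mor L, rg g = sr a ->
      s (kcomp a g) ** ss (kcomp a g) = s (kcomp b g) ** ss (kcomp b g)).
  move=> [hn hc] g hg; apply: (p2_p1 H hab hg (p2_normal H hab hn)).
  exact/hc/diag_gen.
split; split => //.
- move=> h2; exact: p1_p3 HA a b hab (p2p1 h2).
- move=> h3; apply: p1p2; exact: (p3_p1 H HL hab h3).
Qed.
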